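(* Let $m\ge 2$ and $\alpha\in[0,1]$. Every deterministic voting rule $f$ that takes ranked preferences with intensities as input satisfies, under mandatory elicitation of the intensities, $$\mathsf{dist}_\alpha(f)\ge 1+2\,\frac{1-\alpha^{\lfloor m/2\rfloor}}{1+\alpha^{\lfloor m/2\rfloor}}.$$
   Context: An election $\mathcal E=(N,A,\vec\sigma)$ has a finite set $N$ of $n$ agents, a set $A$ of $m$ alternatives, and a profile $\vec\sigma=(\sigma_1,\dots,\sigma_n)$. Each $\sigma_i=(\pi_i,\Join_i)$ consists of a bijection $\pi_i:[m]\to A$, where $\pi_i(1)$ is agent $i$'s most preferred alternative, and a map $\Join_i:[m-1]\to\{\succ,\succ\!\!\succ\}$ recording strong ($\succ\!\!\succ$) or ordinary ($\succ$) preference between consecutive alternatives. A metric $d$ on $N\cup A$ is nonnegative and symmetric, satisfies the triangle inequality, and has $d(x,x)=0$. For $\alpha\in[0,1]$, the profile $\vec\sigma$ is $\alpha$-consistent with $d$ under mandatory elicitation if for every agent $i$ and every $j\in[m-1]$: - if $\Join_i(j)=\,\succ$, then $d(i,\pi_i(j+1))\ge d(i,\pi_i(j))>\alpha\, d(i,\pi_i(j+1))$; - if $\Join_i(j)=\,\succ\!\!\succ$, then $d(i,\pi_i(j))\le \alpha\, d(i,\pi_i(j+1))$. Let $\mathrm{sc}_d(a)=\sum_{i\in N}d(i,a)$. Define $\mathsf{dist}_\alpha(a,\mathcal E)=\sup_d \mathrm{sc}_d(a)/\min_{b\in A}\mathrm{sc}_d(b)$ over such $\alpha$-consistent metrics $d$.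 For a deterministic voting rule $f$ (mapping any profile over the $m$ alternatives to an alternative), $\mathsf{dist}_\alpha(f)=\sup_{\mathcal E}\mathsf{dist}_\alpha(f(\vec\sigma),\mathcal E)$ over all elections with $m$ alternatives. *)

(* Defs.v *)
From HB Require Import structures.
From mathcomp Require Import all_boot all_order all_algebra all_fingroup.
From mathcomp Require Import all_reals.
Set Implicit Arguments. Unset Strict Implicit. Unset Printing Implicit Defensive.
Import Order.TTheory GRing.Theory Num.Theory.
Local Open Scope ring_scope.

(* A ballot over the alternatives A = 'I_m: a bijection pi : positions -> alternatives
   (position 0 = most preferred, i.e. pi(1) in the paper's 1-indexed notation) and an
   intensity map on the m-1 consecutive gaps: true = strong (>>), false = ordinary (>). *)
Record ballot (m : nat) := Ballot {
  bperm : {perm 'I_m};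
  bstrong : {ffun 'I_m.-1 -> bool} }.

Definition profile (m n : nat) := 'I_n -> ballot m.

Definition voting_rule (m : nat) := forall n : nat, profile m n -> 'I_m.

Definition pt (n m : nat) := ('I_n + 'I_m)%type.

Definition is_metric (R : realType) (T : Type) (d : T -> T -> R) : Prop :=
  (forall x y, 0 <= d x y) /\ (forall x y, d x y = d y x) /\
  (forall x y z, d x z <= d x y + d y z) /\ (forall x, d x x = 0).

Definition alpha_consistent (R : realType) (alpha : R) (m n : nat)
    (sigma : profile m n) (d : pt n m -> pt n m -> R) : Prop :=
  forall (i : 'I_n) (j : 'I_m.-1) (k1 k2 : 'I_m),
    val k1 = val j -> val k2 = (val j).+1 ->
    let a1 := bperm (sigma i) k1 in
    let a2 := bperm (sigma i) k2 in
    if bstrong (sigma i) j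
    then d (inl i) (inr a1) <= alpha * d (inl i) (inr a2)
    else (d (inl i) (inr a1) <= d (inl i) (inr a2)) &&
         (alpha * d (inl i) (inr a2) < d (inl i) (inr a1)).

Definition sc (R : realType) (n m : nat) (d : pt n m -> pt n m -> R) (a : 'I_m) : R :=
  \sum_(i < n) d (inl i) (inr a).

(* Main.v *)
Require Import Defs.
From HB Require Import structures.
From mathcomp Require Import all_boot all_order all_algebra all_fingroup.
From mathcomp Require Import all_reals.
From mathcomp Require Import ring lra zify.
Import Order.TTheory GRing.Theory Num.Theory.
Local Open Scope ring_scope.
Lemma powdiff (R : realType) (a r : R) n : 0 <= a -> a <= r -> r <= 1 ->
  r ^+ n - a ^+ n <= n%:R * (r - a).
Proof.
move=> a0 ar r1; elim: n => [|n IH]; first by rewrite !expr0 subrr mul0r.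
have D : a ^+ n <= r ^+ n by apply: lerXn2r => //; rewrite qualifE /=; lra.
have an1 : a ^+ n <= 1 by apply: exprn_ile1; lra.
have an0 : 0 <= a ^+ n by apply: exprn_ge0.
rewrite !exprS -addn1 natrD.
nra.
Qed.

Lemma choose_r (R : realType) (a c : R) (K : nat) : 0 <= a -> a < 1 -> (0 < K)%N ->
  c * (1 + a ^+ K) < 3 - a ^+ K ->
  exists r : R, [/\ a < r, r < 1 & c * (1 + r ^+ K) < 3 - r ^+ K].
Proof.
move=> a0 a1 K0 hc.
have Kpos : 0 < K%:R :> R by rewrite ltr0n.
have [cle|cgt] := lerP c (-1).
  exists ((a + 1) / 2); split; try lra.
  have s0 : 0 <= ((a + 1) / 2) ^+ K by apply: exprn_ge0; lra.
  nra.
set g := 3 - c - (1 + c) * a ^+ K.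
have gpos : 0 < g by rewrite /g; lra.
set del := Order.min ((1 - a) / 2) (g / (2 * ((1 + c) * K%:R))).
have d1 : del <= (1 - a) / 2 by rewrite /del ge_min lexx.
have d2 : del <= g / (2 * ((1 + c) * K%:R)) by rewrite /del ge_min lexx orbT.
have d0 : 0 < del.
  rewrite /del lt_min; apply/andP; split; first lra.
  apply: divr_gt0 => //; nra.
have d2' : (1 + c) * K%:R * del <= g / 2.
  have := d2; rewrite ler_pdivlMr; last nra.
  nra.
exists (a + del); split; try lra.
have H := @powdiff R a (a + del) K a0 ltac:(lra) ltac:(lra).
have aK0 : 0 <= a ^+ K by apply: exprn_ge0.
have H2 : (1 + c) * ((a + del) ^+ K - a ^+ K) <= (1 + c) * (K%:R * (a + del - a)).
  by apply: ler_wpM2l => //; lra.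
move: H2 d2' gpos; rewrite /g; set s := (a + del) ^+ K; set b := a ^+ K.
have -> : a + del - a = del by ring.
move=> H2 d2' gp.
lra.
Qed.

Definition dgen (R : realType) (T : Type) (isA : T -> bool) (lp h : T -> R) (u v : T) : R :=
  if isA u then (if isA v then 0 else h v) else if isA v then h u else `|lp u - lp v|.

Lemma dgen_metric (R : realType) (T : Type) (isA : T -> bool) (lp h : T -> R) :
  (forall u, 0 <= h u) -> (forall u v, `|lp u - lp v| <= h u + h v) ->
  (forall u v, h v <= h u + `|lp u - lp v|) -> is_metric (@dgen R T isA lp h).
Proof.
move=> h0 H2 H3; split; [|split; [|split]].
- move=> x y; rewrite /dgen; case: (isA x); case: (isA y) => //.
- move=> x y; rewrite /dgen; case: (isA x); case: (isA y) => //; by rewrite distrC.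
- move=> x y z; rewrite /dgen.
  have := H3 y z; have := H3 y x; have := H2 x z; have := ler_distD (lp y) (lp x) (lp z).
  have := distrC (lp x) (lp y); have := h0 x; have := h0 y; have := h0 z.
  have := normr_ge0 (lp x - lp z).
  case: (isA x); case: (isA y); case: (isA z) => /=; lra.
- by move=> x; rewrite /dgen; case: (isA x) => //; rewrite subrr normr0.
Qed.
Lemma construct (R : realType) (m K : nat) (alpha r c : R) (sigma : profile m 2)
  (A B : 'I_2) (w : 'I_m) :
  A != B -> (forall i j, bstrong (sigma i) j = false) -> 0 <= alpha -> alpha < r -> r < 1 ->
  (0 < K)%N -> (K <= val ((bperm (sigma B))^-1%g w))%N -> c * (1 + r ^+ K) < 3 - r ^+ K ->
  exists d : pt 2 m -> pt 2 m -> R,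
    is_metric d /\ alpha_consistent alpha sigma d /\
    exists b0 : 'I_m, (forall b : 'I_m, sc d b0 <= sc d b) /\ c * sc d b0 < sc d w.
Proof.
move=> AB hs a0 ar r1 K0 hw hc.
set pB := bperm (sigma B).
set s := r ^+ K.
set t := fun x : 'I_m => r ^+ (K - val (pB^-1%g x)).
set z := (1 - s) / 2.
set e := (1 + s) / 2.
have r0 : 0 < r by lra.
have s1 : s < 1 by rewrite /s exprn_ilt1 ?(ltW r0) // -lt0n.
have s0 : 0 < s by rewrite /s exprn_gt0.
have tpB : forall k, t (pB k) = r ^+ (K - val k) by move=> k; rewrite /t permK.
have tlo : forall x, s <= t x.
  by move=> x; rewrite /t /s; apply: ler_wiXn2l; [lra|lra|apply: leq_subr].
have thi : forall x, t x <= 1 by move=> x; apply: exprn_ile1; lra.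
set isA := fun u : pt 2 m => u == inl A.
set lp := fun u : pt 2 m => match u with inl _ => 0 | inr x => t x end.
set h := fun u : pt 2 m => match u with inl _ => e | inr _ => z end.
exists (@dgen R _ isA lp h).
have key : forall i x, @dgen R _ isA lp h (inl i) (inr x) = if i == A then z else t x.
  move=> i x; rewrite /dgen /isA /=.
  have -> : (inl i == inl A :> pt 2 m) = (i == A) by [].
  case: (i == A) => //.
  by rewrite sub0r normrN ger0_norm //; have := tlo x; lra.
have iB : forall i, i != A -> i = B.
  move=> i; move: AB; rewrite -!val_eqE => AB iA; apply/val_inj.
  move: (ltn_ord i) (ltn_ord A) (ltn_ord B) AB iA => /=; lia.
have scE : forall x, sc (@dgen R _ isA lp h) x = z + t x.
  move=> x; rewrite /sc big_ord_recl big_ord1 !key.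
  case h0: (ord0 == A); case h1: (lift ord0 ord0 == A) => //.
  + by move: h0 h1; rewrite -!val_eqE /= => /eqP <-.
  + by rewrite addrC.
  + have E0 := iB _ (negbT h0); have E1 := iB _ (negbT h1).
    by move: E1; rewrite -E0 => /(congr1 val).
split; [|split].
- apply: dgen_metric.
  + by case=> _ /=; rewrite /e /z; lra.
  + case=> [i|x] [i'|x'] /=.
    * rewrite subrr normr0 /e; lra.
    * rewrite sub0r normrN ger0_norm; last by have := tlo x'; lra.
      have := thi x'; rewrite /e /z; lra.
    * rewrite subr0 ger0_norm; last by have := tlo x; lra.
      have := thi x; rewrite /e /z; lra.
    * rewrite ler_norml; have := thi x; have := thi x'; have := tlo x; have := tlo x'.
      rewrite /z; move=> *; apply/andP; split; lra.
  + case=> [i|x] [i'|x'] /=.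
    * rewrite subrr normr0; lra.
    * have := normr_ge0 (0 - t x'); rewrite /e /z; lra.
    * rewrite subr0 ger0_norm; last by have := tlo x; lra.
      have := tlo x; rewrite /e /z; lra.
    * have := normr_ge0 (t x - t x'); lra.
- move=> i j k1 k2 h1 h2 /=; rewrite hs !key.
  idtac.
  have [iA|iA] := eqVneq i A.
    by apply/andP; split; rewrite /z; nra.
  rewrite (iB i iA) -/pB !tpB h1 h2.
  have [jK|jK] := ltnP (val j) K.
    rewrite -(subnSK jK) exprS.
    have ep : 0 < r ^+ (K - (val j).+1) by rewrite exprn_gt0.
    by apply/andP; split; nra.
  have -> : (K - val j = 0)%N by lia.
  have -> : (K - (val j).+1 = 0)%N by lia.
  by rewrite expr0; apply/andP; split; lra.
- have m0 : (0 < m)%N by apply: leq_ltn_trans (leq0n _) (ltn_ord w).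
  exists (pB (Ordinal m0)); split.
    by move=> b; rewrite !scE tpB subn0 -/s; have := tlo b; lra.
  rewrite !scE tpB subn0 /t.
  have -> : (K - val (pB^-1%g w) = 0)%N by apply/eqP; rewrite subn_eq0.
  rewrite expr0 -/s /z.
  move: hc; rewrite -/s => hc; rewrite mulrDr; have -> : c * ((1 - s) / 2) = c / 2 - (c * s) / 2 by rewrite mulrA mulrBr mulr1 mulrBl.
  lra.
Qed.

Lemma half_pos m : (2 <= m)%N -> (0 < m./2)%N.
Proof. by case: m => [|[|m]]. Qed.

Lemma half_le m : (m./2 + m./2 <= m)%N.
Proof. by rewrite -{3}(odd_double_half m) addnn leq_addl. Qed.

Theorem lemma1 (R : realType) (m : nat) (alpha : R) :
  (2 <= m)%N -> 0 <= alpha -> alpha <= 1 ->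
  forall f : voting_rule m, forall c : R,
    c < 1 + 2 * ((1 - alpha ^+ m./2) / (1 + alpha ^+ m./2)) ->
    exists (n : nat) (sigma : profile m n) (d : pt n m -> pt n m -> R),
      is_metric d /\ alpha_consistent alpha sigma d /\
      exists b0 : 'I_m, (forall b : 'I_m, sc d b0 <= sc d b) /\
        c * sc d b0 < sc d (f n sigma).
Proof.
move=> m2 a0 a1 f c hc.
have K0 := @half_pos m m2.
have K2 := half_le m.
have [aeq|ane] := eqVneq alpha 1.
  move: hc; rewrite aeq expr1n subrr mul0r mulr0 addr0 => hc.
  set sigma : profile m 1 := fun _ => Ballot 1%g [ffun _ => true].
  set d := @dgen R (pt 1 m) (fun u => if u is inl _ then true else false)
             (fun _ => 0) (fun _ => 1).
  have dE : forall i x, d (inl i) (inr x) = 1 by [].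
  have scE : forall x, sc d x = 1 by move=> x; rewrite /sc big_ord1 dE.
  exists 1%N, sigma, d; split; [|split].
  - apply: dgen_metric => //= *; rewrite subrr normr0; lra.
  - move=> i j k1 k2 _ _ /=; rewrite ffunE !dE mulr1; lra.
  - exists (f 1%N sigma); split; first by move=> b; rewrite !scE.
    rewrite !scE; lra.
have a1' : alpha < 1 by rewrite lt_neqAle ane.
set K := m./2.
set b := alpha ^+ K.
have b0 : 0 <= b by apply: exprn_ge0.
have hc' : c * (1 + b) < 3 - b.
  have bp : 0 < 1 + b by lra.
  have := hc; rewrite -(ltr_pM2r bp) => hc2.
  have E : (1 - b) / (1 + b) * (1 + b) = 1 - b by rewrite divfK // gt_eqF.
  move: hc2; rewrite mulrDl mul1r -mulrA E; lra.
have [r [ar r1 hr]] := @choose_r R alpha c K a0 a1' K0 hc'.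
set revp := perm (@rev_ord_inj m).
set sigma : profile m 2 := fun i =>
  Ballot (if val i == 0%N then 1%g else revp) [ffun _ => false].
have hs : forall i j, bstrong (sigma i) j = false by move=> i j; rewrite ffunE.
exists 2%N, sigma.
set w := f 2%N sigma.
have [Kw|Kw] := leqP K (val w).
  apply: (@construct R m K alpha r c sigma ord_max ord0 w) => //.
  by rewrite /= invg1 perm1.
apply: (@construct R m K alpha r c sigma ord0 ord_max w) => //.
have rw : revp (rev_ord w) = w by rewrite permE rev_ordK.
rewrite /= -{1}rw permK /=.
move: (ltn_ord w) Kw K2; rewrite -/K; case: w rw => wv hwv /= _; lia.
Qed.
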